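(* Let $\mathcal{H}$ be a separable complex Hilbert space, $H$ a self-adjoint operator on $\mathcal{H}$, $\hbar>0$ a constant, and $\psi\in\mathcal{H}$ a unit vector in the domain of $H$. For $t\in\mathbb{R}$ let $p(t)=\left|\langle \psi | e^{-\mathrm{i} tH/\hbar}\psi\rangle\right|^2$, and for $\alpha\ge 0$, $\tau\in\mathbb{R}$ and positive integers $N$ let $p_{N,\alpha}(\tau)=p(\tau N^{\alpha-1})^N$. Then: (i) if $0\le \alpha<1/2$, then $\lim_{N\to+\infty}p_{N,\alpha}(\tau)=1$, uniformly in $\tau$ on compact subsets of $\mathbb{R}$; (ii) if $\alpha=1/2$, then $\lim_{N\to+\infty}p_{N,1/2}(\tau)=\exp(-\tau^2/\tau_Z^2)$, uniformly in $\tau$ on compact subsets of $\mathbb{R}$, where $\tau_Z^{-2}=\frac{1}{\hbar^2}\left(\langle H\psi|H\psi\rangle-\langle\psi|H\psi\rangle^2\right)$; (iii) if $1/2<\alpha<1$ and $\psi$ is not an eigenvector of $H$, then $\lim_{N\to+\infty}p_{N,\alpha}(\tau)=0$, uniformly in $\tau$ on compact subsets of $\mathbb{R}\setminus\{0\}$.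
   Context: $\langle\cdot|\cdot\rangle$ denotes the inner product of $\mathcal{H}$ (linear in the second argument), and $e^{-\mathrm{i}tH/\hbar}$ is the unitary group generated by $H$ via the spectral theorem. The quantity $\langle H\psi|H\psi\rangle-\langle\psi|H\psi\rangle^2$ is the variance of $H$ in $\psi$; it vanishes exactly when $\psi$ is an eigenvector, in which case $\tau_Z^{-2}=0$ and the formula in (ii) reads $1$. *)

(* Defs.v *)
From mathcomp Require Import all_boot all_order all_algebra.
From mathcomp Require Import all_classical all_reals all_analysis.
From mathcomp Require Export complex.
Export GRing.Theory Num.Theory numFieldNormedType.Exports.

Set Implicit Arguments.
Unset Strict Implicit.
Unset Printing Implicit Defensive.

Local Open Scope ring_scope.
Local Open Scope complex_scope.
Local Open Scope classical_set_scope.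

Section Hilbert.
Variables (R : realType) (V : lmodType R[i]) (ip : V -> V -> R[i]).

(* ip is an inner product, linear in the SECOND argument, conjugate-linear in
   the first (physicists' convention). *)
Definition is_inner_product : Prop :=
  [/\ (forall x y z (a : R[i]), ip x (a *: y + z) = a * ip x y + ip x z),
      (forall x y, ip y x = (ip x y)^*),
      (forall x, 0 <= ip x x) &
      (forall x, ip x x = 0 -> x = 0)].

Definition hnorm (x : V) : R := Num.sqrt (complex.Re (ip x x)).

Definition hcomplete : Prop :=
  forall u : nat -> V,
    (forall e : R, 0 < e -> exists N : nat, forall m n : nat,
        (N <= m)%N -> (N <= n)%N -> hnorm (u m - u n) < e) ->
    exists l : V, forall e : R, 0 < e -> exists N : nat, forall n : nat,
        (N <= n)%N -> hnorm (u n - l) < e.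

Definition hseparable : Prop :=
  exists d : nat -> V, forall (x : V) (e : R), 0 < e ->
    exists n : nat, hnorm (x - d n) < e.

Definition separable_Hilbert : Prop :=
  [/\ is_inner_product, hcomplete & hseparable].

(* a (possibly unbounded) self-adjoint operator H with domain D:
   D is a dense linear subspace, H is linear on D, and H equals its adjoint
   H^* (same domain, same action). *)
Definition self_adjoint (D : set V) (H : V -> V) : Prop :=
  [/\ D 0 /\
      (forall x y (a : R[i]), D x -> D y -> D (a *: x + y)),
      (forall x y (a : R[i]), D x -> D y -> H (a *: x + y) = a *: H x + H y),
      (forall (x : V) (e : R), 0 < e -> exists2 y, D y & hnorm (x - y) < e),
      (forall y : V, (exists z : V, forall x, D x -> ip (H x) y = ip x z) <-> D y) &
      (forall x y, D x -> D y -> ip (H x) y = ip x (H y))].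

Definition strongly_continuous_unitary_group (U : R -> V -> V) : Prop :=
  [/\ (forall t x y (a : R[i]), U t (a *: x + y) = a *: U t x + U t y),
      (forall t x y, ip (U t x) (U t y) = ip x y),
      (forall x, U 0 x = x),
      (forall s t x, U (s + t) x = U s (U t x)) &
      (forall (x : V) (t e : R), 0 < e -> exists2 d : R, 0 < d &
          forall s : R, `|s - t| < d -> hnorm (U s x - U t x) < e)].

Definition diff_quot_to (U : R -> V -> V) (x v : V) : Prop :=
  forall e : R, 0 < e -> exists2 d : R, 0 < d &
    forall h : R, 0 < `|h| < d -> hnorm ((h^-1)%:C *: (U h x - x) - v) < e.

(* U t = exp(- i t H / hbar): U is the strongly continuous unitary group
   whose generator is -(i/hbar) H, with domain exactly D. *)
Definition generated_by (hbar : R) (D : set V) (H : V -> V) (U : R -> V -> V) : Prop :=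
  [/\ strongly_continuous_unitary_group U,
      (forall x, (exists v, diff_quot_to U x v) <-> D x) &
      (forall x, D x -> diff_quot_to U x (- ('i / hbar%:C) *: H x))].

End Hilbert.

Definition sqmod (R : realType) (z : R[i]) : R :=
  complex.Re z ^+ 2 + complex.Im z ^+ 2.

Definition unif_cvg_on (R : realType) (K : set R) (f : nat -> R -> R) (g : R -> R) : Prop :=
  forall e : R, 0 < e -> exists N0 : nat, forall N : nat, (0 < N)%N -> (N0 <= N)%N ->
    forall tau, K tau -> `|f N tau - g tau| < e.

Definition unif_cvg_compacts (R : realType) (S : set R) (f : nat -> R -> R) (g : R -> R) : Prop :=
  forall K : set R, compact K -> K `<=` S -> unif_cvg_on K f g.

(* Main.v *)
Require Import Defs.
From mathcomp Require Import all_boot all_order all_algebra.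
From mathcomp Require Import all_classical all_reals all_analysis.
From mathcomp Require Import complex.
Import Order.TTheory GRing.Theory Num.Theory numFieldNormedType.Exports.
Local Open Scope ring_scope.
Local Open Scope complex_scope.
Local Open Scope classical_set_scope.
From mathcomp Require Import ring lra.
Local Open Scope ring_scope.
Local Open Scope complex_scope.

Section CX.
Variable (R : realType).
Implicit Types (a b : R[i]).
Lemma ReD a b : complex.Re (a + b) = complex.Re a + complex.Re b.
Proof. by case: a => ? ?; case: b => ? ?. Qed.
Lemma ImD a b : complex.Im (a + b) = complex.Im a + complex.Im b.
Proof. by case: a => ? ?; case: b => ? ?. Qed.
Lemma ReN a : complex.Re (- a) = - complex.Re a.
Proof. by case: a. Qed.
Lemma ImN a : complex.Im (- a) = - complex.Im a.
Proof. by case: a. Qed.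
Lemma ReM a b : complex.Re (a * b) = complex.Re a * complex.Re b - complex.Im a * complex.Im b.
Proof. by case: a => ? ?; case: b => ? ? /=. Qed.
Lemma ImM a b : complex.Im (a * b) = complex.Re a * complex.Im b + complex.Im a * complex.Re b.
Proof. by case: a => ? ?; case: b => ? ? /=. Qed.
Lemma ReJ a : complex.Re (conjc a) = complex.Re a.
Proof. by case: a. Qed.
Lemma ImJ a : complex.Im (conjc a) = - complex.Im a.
Proof. by case: a. Qed.
Lemma ReC (r : R) : complex.Re (r%:C) = r. Proof. by []. Qed.
Lemma ImC (r : R) : complex.Im (r%:C) = 0. Proof. by []. Qed.
Lemma Re1 : complex.Re (1 : R[i]) = 1. Proof. by []. Qed.
Lemma Im1 : complex.Im (1 : R[i]) = 0. Proof. by []. Qed.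
Lemma Rei : complex.Re ('i : R[i]) = 0. Proof. by []. Qed.
Lemma Imi : complex.Im ('i : R[i]) = 1. Proof. by []. Qed.
Lemma ge0C a : 0 <= a -> complex.Im a = 0 /\ 0 <= complex.Re a.
Proof. case: a => x y; rewrite lecE /= => /andP[/eqP -> ->]. done. Qed.
Lemma conjC_real (r : R) : conjc (r%:C) = r%:C.
Proof. by rewrite /= oppr0. Qed.
Lemma conjD a b : conjc (a + b) = conjc a + conjc b.
Proof. by case: a => ? ?; case: b => ? ? /=; congr (_ +i* _); ring. Qed.
Lemma conjM a b : conjc (a * b) = conjc a * conjc b.
Proof. by case: a => ? ?; case: b => ? ? /=; congr (_ +i* _); ring. Qed.
Lemma conjN a : conjc (- a) = - conjc a.
Proof. by case: a => ? ? /=. Qed.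
End CX.

Definition expand_hyp (R : realType) (q : R -> R) (v : R) :=
  forall e : R, 0 < e -> exists2 d : R, 0 < d &
    forall t, `|t| < d -> `|q t - (1 - v * t ^+ 2)| <= e * t ^+ 2.
Arguments expand_hyp {R}.

Section IP.
Variables (R : realType) (V : lmodType R[i]) (ip : V -> V -> R[i]).
Hypothesis hip : is_inner_product ip.

Lemma ipD2 x y z : ip x (y + z) = ip x y + ip x z.
Proof. by case: hip => h _ _ _; rewrite -{1}[y]scale1r h mul1r. Qed.
Lemma ip0 x : ip x 0 = 0.
Proof.
have := ipD2 x 0 0; rewrite addr0 => h.
by apply: (@addrI _ (ip x 0)); rewrite addr0 -h.
Qed.
Lemma ipZ2 x a y : ip x (a *: y) = a * ip x y.
Proof. by case: hip => h _ _ _; rewrite -[a *: y]addr0 h ip0 addr0. Qed.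
Lemma ipN2 x y : ip x (- y) = - ip x y.
Proof. by rewrite -scaleN1r ipZ2 mulN1r. Qed.
Lemma ipB2 x y z : ip x (y - z) = ip x y - ip x z.
Proof. by rewrite ipD2 ipN2. Qed.
Lemma ipJ x y : ip y x = conjc (ip x y).
Proof. by case: hip. Qed.
Lemma ipD1 x y z : ip (x + y) z = ip x z + ip y z.
Proof. by rewrite [LHS]ipJ ipD2 conjD -!ipJ. Qed.
Lemma ipZ1 a x y : ip (a *: x) y = conjc a * ip x y.
Proof. by rewrite [LHS]ipJ ipZ2 conjM -ipJ. Qed.
Lemma ipN1 x y : ip (- x) y = - ip x y.
Proof. by rewrite [LHS]ipJ ipN2 conjN -ipJ. Qed.
Lemma ipB1 x y z : ip (x - y) z = ip x z - ip y z.
Proof. by rewrite ipD1 ipN1. Qed.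

Lemma ReipJ x y : complex.Re (ip y x) = complex.Re (ip x y).
Proof. by rewrite ipJ; case: (ip x y). Qed.
Lemma ImipJ x y : complex.Im (ip y x) = - complex.Im (ip x y).
Proof. by rewrite ipJ; case: (ip x y). Qed.

Definition n2 x := complex.Re (ip x x).
Lemma n2_ge0 x : 0 <= n2 x.
Proof. by case: hip => _ _ h _; have [] := @ge0C R _ (h x). Qed.
Lemma ipxx x : ip x x = (n2 x)%:C.
Proof.
case: hip => _ _ h _; have [h1 _] := @ge0C R _ (h x).
by rewrite /n2; case: (ip x x) h1 => a b /= ->.
Qed.
Lemma n2D x y : n2 (x + y) = n2 x + 2 * complex.Re (ip x y) + n2 y.
Proof.
rewrite /n2 ipD1 !ipD2 !ReD [complex.Re (ip y x)]ReipJ; ring.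
Qed.
Lemma n2B x y : n2 (x - y) = n2 x - 2 * complex.Re (ip x y) + n2 y.
Proof.
rewrite /n2 !(ipD1, ipD2, ipN1, ipN2) !(ReD, ReN) [complex.Re (ip y x)]ReipJ; ring.
Qed.
Lemma n2Z a x : n2 (a *: x) = (complex.Re a ^+ 2 + complex.Im a ^+ 2) * n2 x.
Proof.
rewrite {1}/n2 ipZ1 ipZ2 ipxx.
case: a => a b /=; ring.
Qed.

Lemma ReZ1C (l : R) x y : complex.Re (ip (l%:C *: x) y) = l * complex.Re (ip x y).
Proof. by rewrite ipZ1 conjC_real ReM ReC ImC mul0r subr0. Qed.

Lemma Re_bound x e (l : R) : 0 < l ->
  2 * `|complex.Re (ip x e)| <= l * n2 x + n2 e / l.
Proof.
move=> l0.
have h1 := n2_ge0 (l%:C *: x - e).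
have h2 := n2_ge0 (l%:C *: x + e).
rewrite n2B n2Z ReZ1C /= in h1.
rewrite n2D n2Z ReZ1C /= in h2.
rewrite expr0n /= addr0 in h1 h2.
have hx := n2_ge0 x; have he := n2_ge0 e.
have hE : l * (n2 e / l) = n2 e by rewrite mulrCA mulfV ?gt_eqF // mulr1.
rewrite -(ler_pM2l l0) mulrDr hE.
set r := complex.Re (ip x e) in h1 h2 *.
case: (lerP 0 r) => hr; [rewrite ger0_norm // | rewrite ltr0_norm //]; nra.
Qed.

Lemma Im_bound x e (l : R) : 0 < l ->
  2 * `|complex.Im (ip x e)| <= l * n2 x + n2 e / l.
Proof.
move=> l0.
have -> : complex.Im (ip x e) = complex.Re (ip x ((- 'i) *: e)).
  by rewrite ipZ2 ReM ReN ImN Rei Imi; ring.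
have -> : n2 e = n2 ((- 'i) *: e).
  by rewrite n2Z ReN ImN Rei Imi; ring.
exact: Re_bound.
Qed.

Lemma expansion (U : R -> V -> V) (psi a : V) :
  (forall t x y, ip (U t x) (U t y) = ip x y) ->
  (forall x, U 0 x = x) ->
  diff_quot_to ip U psi a ->
  ip psi psi = 1 ->
  expand_hyp (fun t => sqmod (ip psi (U t psi))) (n2 a - complex.Im (ip psi a) ^+ 2).
Proof.
move=> hU hU0 hd hpp e e0.
set K := n2 a; set m := complex.Im (ip psi a).
have K0 : 0 <= K := n2_ge0 a.
have m0 := normr_ge0 m.
pose eta := e / (6 * `|m| + 6 + e).
have den0 : 0 < 6 * `|m| + 6 + e by lra.
have eta0 : 0 < eta by rewrite divr_gt0.
have etaE : eta * (6 * `|m| + 6 + e) = e by rewrite /eta mulfVK ?gt_eqF.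
have eta1 : eta <= 1 by nra.
pose l := eta / (4 * (K + 1)).
have l0 : 0 < l by rewrite divr_gt0 //; lra.
have lE : l * (4 * (K + 1)) = eta by rewrite /l mulfVK ?gt_eqF //; lra.
pose rho := l * eta / 4.
have rho0 : 0 < rho by rewrite /rho divr_gt0 // mulr_gt0.
have [d1 d10 Hd1] := hd (Num.sqrt rho) ltac:(by rewrite sqrtr_gt0).
pose d2 := Num.sqrt e / (K + 1).
have d20 : 0 < d2 by rewrite divr_gt0 ?sqrtr_gt0 //; lra.
exists (Order.min d1 d2); first by rewrite lt_min d10 d20.
move=> t; rewrite lt_min => /andP[ht1 ht2].
have [->|t0] := eqVneq t 0.
  rewrite hU0 hpp /sqmod /= !expr2 !(mulr0, mul0r, mulr1, addr0, subr0, subrr, normr0).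
  done.
have tn0 : 0 < `|t| by rewrite normr_gt0.
pose w := (t^-1)%:C *: (U t psi - psi).
have hw := Hd1 t ltac:(by rewrite tn0 ht1).
rewrite -/w in hw.
set ev := w - a in hw.
have hev : n2 ev < rho.
  by move: hw; rewrite /hnorm ltr_sqrt.
have hDelta : U t psi - psi = t%:C *: w.
  rewrite /w scalerA.
  have -> : t%:C * (t^-1)%:C = 1.
    by rewrite -rmorphM mulfV.
  by rewrite scale1r.
have hwa : w = a + ev by rewrite /ev addrC subrK.
set phi := ip psi (U t psi).
have hn2U : n2 (U t psi) = 1 by rewrite /n2 hU hpp.
have hn2p : n2 psi = 1 by rewrite /n2 hpp.
have hRe : complex.Re phi = 1 - t ^+ 2 * n2 w / 2.
  have := n2B (U t psi) psi.
  rewrite hDelta n2Z ReC ImC hn2U hn2p ReipJ -/phi expr0n /= addr0 => h.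
  by rewrite h; field; rewrite ?pnatr_eq0.
have hIm : complex.Im phi = t * complex.Im (ip psi w).
  have -> : phi = ip psi ((U t psi - psi) + psi) by rewrite subrK.
  rewrite ipD2 hpp hDelta ipZ2 ImD ImM ReC ImC Im1; ring.
set Rw := n2 w; set I := complex.Im (ip psi w).
have hR : Rw = K + 2 * complex.Re (ip a ev) + n2 ev by rewrite /Rw hwa n2D.
have hI : I = m + complex.Im (ip psi ev) by rewrite /I hwa ipD2 ImD.
have b1 := Re_bound a ev l l0.
have b2 := Im_bound psi ev l l0.
rewrite -/K in b1; rewrite hn2p mulr1 in b2.
have ev0 := n2_ge0 ev.
have hevl : n2 ev / l <= eta / 4.
  rewrite ler_pdivrMr //; rewrite /rho in hev; nra.
have lK : l * K <= eta / 4 by nra.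
have l4 : l <= eta / 4 by nra.
have rho4 : rho <= eta / 4 by rewrite /rho; nra.
have hRK : `|Rw - K| <= eta.
  rewrite hR.
  have -> : K + 2 * complex.Re (ip a ev) + n2 ev - K = 2 * complex.Re (ip a ev) + n2 ev by ring.
  apply: (le_trans (ler_normD _ _)); rewrite normrM gtr0_norm // (ger0_norm ev0); lra.
have hIm' : `|I - m| <= eta / 4.
  rewrite hI.
  have -> : m + complex.Im (ip psi ev) - m = complex.Im (ip psi ev) by ring.
  lra.
have Rw0 : 0 <= Rw := n2_ge0 w.
have RwK : Rw <= K + 1.
  have := ler_norm (Rw - K); lra.
have hI2 : `|I ^+ 2 - m ^+ 2| <= eta * (2 * `|m| + 1).
  have -> : I ^+ 2 - m ^+ 2 = (I - m) * ((I - m) + 2 * m) by ring.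
  rewrite normrM.
  have h1 : `|(I - m) + 2 * m| <= eta / 4 + 2 * `|m|.
    apply: (le_trans (ler_normD _ _)); rewrite normrM gtr0_norm //; lra.
  have h2 := normr_ge0 (I - m).
  have h3 := normr_ge0 ((I - m) + 2 * m).
  nra.
have ht2' : t ^+ 2 * (K + 1) ^+ 2 < e.
  have : `|t| * (K + 1) < Num.sqrt e.
    by move: ht2; rewrite /d2 ltr_pdivlMr //; lra.
  move=> hh.
  have h0 : 0 <= `|t| * (K + 1) by rewrite mulr_ge0 //; lra.
  rewrite -(sqr_sqrtr (ltW e0)) -exprMn -real_normK ?num_real //.
  rewrite ltrXn2r // ?nnegrE // ?sqrtr_ge0 //.
  by rewrite normrM (ger0_norm (x := K + 1)) //; lra.
have hRw2 : t ^+ 2 * Rw ^+ 2 / 4 <= e / 4.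
  have : Rw ^+ 2 <= (K + 1) ^+ 2 by rewrite lerXn2r ?nnegrE //; lra.
  have := sqr_ge0 t; nra.
have key : sqmod phi - (1 - (K - m ^+ 2) * t ^+ 2) =
    t ^+ 2 * ((K - Rw) + (I ^+ 2 - m ^+ 2) + t ^+ 2 * Rw ^+ 2 / 4).
  by rewrite /sqmod hRe hIm -/I -/Rw; field; rewrite ?pnatr_eq0.
rewrite key normrM ger0_norm ?sqr_ge0 // mulrC.
apply: ler_wpM2r; first exact: sqr_ge0.
apply: (le_trans (ler_normD _ _)).
have hpos : 0 <= t ^+ 2 * Rw ^+ 2 / 4 by rewrite divr_ge0 // mulr_ge0 // sqr_ge0.
rewrite (ger0_norm hpos).
apply: (le_trans (lerD (ler_normD _ _) (lexx _))).
have : `|K - Rw| <= eta by rewrite distrC.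
have hm : eta * (2 * `|m| + 1) + eta <= e / 3.
  have : eta * (6 * `|m| + 6) <= e by nra.
  lra.
lra.
Qed.

Lemma variance_pos (psi y : V) : ip psi psi = 1 ->
  0 <= n2 y - complex.Re (ip psi y) ^+ 2 /\
  (n2 y - complex.Re (ip psi y) ^+ 2 = 0 -> y = ip psi y *: psi).
Proof.
move=> hpp.
set z := ip psi y.
have hn2p : n2 psi = 1 by rewrite /n2 hpp.
have E : n2 (y - z *: psi) = n2 y - (complex.Re z ^+ 2 + complex.Im z ^+ 2).
  rewrite n2B n2Z hn2p ipZ2 ReM [ip y psi]ipJ -/z.
  by case: z => a b /=; ring.
have h0 := n2_ge0 (y - z *: psi).
have hi := sqr_ge0 (complex.Im z).
split; first lra.
move=> h.
have h1 : n2 (y - z *: psi) = 0 by lra.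
have h2 : ip (y - z *: psi) (y - z *: psi) = 0 by rewrite ipxx h1.
case: hip => _ _ _ hdef.
by apply/eqP; rewrite -subr_eq0; apply/eqP; apply: hdef.
Qed.
End IP.
Arguments n2 {R V} ip x.

Lemma expR_up (R : realType) (k : R) : 0 <= k <= 2^-1 -> expR k <= 1 + 2 * k.
Proof.
move=> /andP[k0 k1].
have h := expR_ge1Dx (- k).
have hp : 0 < 1 - k by lra.
have e0 := expR_gt0 k.
rewrite expRN in h.
have : 1 <= (1 + 2 * k) * (1 - k) by nra.
move=> h2.
have h3 : (1 - k) * expR k <= (expR k)^-1 * expR k by rewrite ler_pM2r.
rewrite mulVf ?(negbT (gt_eqF e0)) // in h3.
nra.
Qed.

Lemma expR_lo1 (R : realType) (x : R) : -2^-1 <= x -> expR (x / (1 + x)) <= 1 + x.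
Proof.
move=> hx.
have hp : 0 < 1 + x by lra.
have h := expR_ge1Dx (- (x / (1 + x))).
rewrite expRN in h.
have e0 := expR_gt0 (x / (1 + x)).
have h1 : 1 + - (x / (1 + x)) = (1 + x)^-1.
  by field; rewrite gt_eqF.
rewrite h1 in h.
by rewrite -(lef_pV2 (x:=_) (y:=_)) ?posrE // .
Qed.

Lemma pow_exp (R : realType) (x y k : R) (N : nat) :
  `|x| <= 2^-1 -> `|N%:R * x - y| + 2 * N%:R * x ^+ 2 <= k -> k <= 2^-1 ->
  `|(1 + x) ^+ N - expR y| <= 2 * k * expR y.
Proof.
move=> hx hk k1.
have N0 : 0 <= N%:R :> R by [].
have x2 : 0 <= x ^+ 2 by rewrite sqr_ge0.
have hxa := ler_norm x; have hxb : - x <= `|x| by rewrite -normrN ler_norm.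
have hya := ler_norm (N%:R * x - y); have hyb : - (N%:R * x - y) <= `|N%:R * x - y| by rewrite -normrN ler_norm.
have k0 : 0 <= k.
  have := normr_ge0 (N%:R * x - y). nra.
have E0 := expR_gt0 y.
have up : (1 + x) ^+ N <= expR y * (1 + 2 * k).
  apply: (le_trans (y := expR x ^+ N)).
    apply: lerXn2r; rewrite ?nnegrE ?expR_ge0 //; first lra.
    by rewrite expR_ge1Dx.
  rewrite -expRM_natl.
  apply: (le_trans (y := expR (y + k))).
    rewrite ler_expR. nra.
  by rewrite expRD ler_pM2l // expR_up // k0 k1.
have lo : expR y * (1 - k) <= (1 + x) ^+ N.
  apply: (le_trans (y := expR (x / (1 + x)) ^+ N)); last first.
    apply: lerXn2r; rewrite ?nnegrE ?expR_ge0 //; first lra.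
    by apply: expR_lo1; lra.
  rewrite -expRM_natl.
  apply: (le_trans (y := expR (y - k))).
    by rewrite expRD ler_pM2l // expRN; have := expR_ge1Dx (- k); rewrite expRN.
  rewrite ler_expR.
  have hp : 0 < 1 + x by lra.
  have -> : N%:R * (x / (1 + x)) = N%:R * x - N%:R * x ^+ 2 / (1 + x).
    by field; rewrite gt_eqF.
  have : N%:R * x ^+ 2 / (1 + x) <= 2 * N%:R * x ^+ 2.
    rewrite ler_pdivrMr //.
    have nx2 : 0 <= N%:R * x ^+ 2 by rewrite mulr_ge0.
    have h2 : 0 <= 2 * (1 + x) - 1 by lra.
    have := mulr_ge0 nx2 h2. lra.
  nra.
rewrite ler_norml; apply/andP; split; nra.
Qed.
Lemma powNE (R : realType) (N : nat) (a : R) : (0 < N)%N ->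
  N%:R `^ a = expR (a * ln (N%:R : R)).
Proof. by move=> N0; rewrite /powR pnatr_eq0 (negbTE (lt0n_neq0 N0)). Qed.

Lemma lnN_gt (R : realType) (z : R) : exists N0 : nat, forall N : nat,
  (N0 <= N)%N -> z < ln (N%:R : R).
Proof.
have e0 := expR_gt0 z.
exists (Num.bound (expR z)).+1 => N hN.
have hb := archi_boundP (ltW e0).
have hN' : expR z < N%:R.
  apply: (lt_le_trans hb); rewrite ler_nat; exact: ltnW.
have Np : (0 : R) < N%:R by apply: lt_trans hN'.
by rewrite -{1}(expRK z) ltr_ln ?posrE.
Qed.

Lemma powN_small (R : realType) (c e : R) : c < 0 -> 0 < e ->
  exists N0 : nat, forall N : nat, (0 < N)%N -> (N0 <= N)%N -> N%:R `^ c < e.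
Proof.
move=> c0 e0; have [N0 HN0] := @lnN_gt R (ln e / c).
exists N0 => N N1 N2; rewrite powNE //.
rewrite -[X in _ < X](lnK (x := e)) ?posrE // ltr_expR.
have := HN0 N N2; rewrite ltr_ndivrMr // => h.
by rewrite mulrC.
Qed.

Lemma powN_big (R : realType) (c L : R) : 0 < c ->
  exists N0 : nat, forall N : nat, (0 < N)%N -> (N0 <= N)%N -> L < N%:R `^ c.
Proof.
move=> c0; have [N0 HN0] := @lnN_gt R (`|L| / c).
exists N0 => N N1 N2; rewrite powNE //.
have := HN0 N N2; rewrite ltr_pdivrMr // => h.
apply: (le_lt_trans (ler_norm L)).
apply: (lt_le_trans (y := 1 + c * ln N%:R)); first by rewrite mulrC; lra.
exact: expR_ge1Dx.
Qed.
Lemma cpt_bound (R : realType) (K : set R) : compact K ->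
  exists M : R, 0 <= M /\ forall x, K x -> `|x| <= M.
Proof.
move=> Kc; have [M0 [M0r HM]] := compact_bounded Kc.
exists (`|M0| + 1); split; first by rewrite addr_ge0.
move=> x Kx; apply: (HM (`|M0| + 1)) => //.
by rewrite (le_lt_trans (real_ler_norm M0r)) // ltrDl.
Qed.

Lemma cpt_away (R : realType) (K : set R) : compact K -> K `<=` ~` [set 0] ->
  exists2 d : R, 0 < d & forall x, K x -> d <= `|x|.
Proof.
move=> Kc K0.
have cK : closed K := compact_closed (@Rhausdorff R) Kc.
have oK := closed_openC cK.
have : nbhs (0:R) (~` K).
  rewrite openE in oK; apply: oK => /= K0'.
  by apply: (K0 0 K0').
move=> /nbhs_ballP [e /= e0 He]; exists e => // x Kx.
rewrite leNgt; apply/negP => xe; apply: (He x) => //.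
by rewrite -ball_normE /= sub0r normrN.
Qed.

Lemma Nt2 (R : realType) (N : nat) (a tau : R) : (0 < N)%N ->
  N%:R * (tau * N%:R `^ a) ^+ 2 = tau ^+ 2 * N%:R `^ (2 * a + 1).
Proof.
move=> N0; rewrite !powNE // exprMn -expRM_natl.
have Np : (0:R) < N%:R by rewrite ltr0n.
rewrite -{1}(lnK (x := N%:R)) ?posrE // mulrCA -expRD.
congr (_ * expR _); rewrite mulrDl mul1r; ring.
Qed.

Lemma t_small (R : realType) (a M d : R) : a < 1 -> 0 <= M -> 0 < d ->
  exists N0 : nat, forall N : nat, (0 < N)%N -> (N0 <= N)%N ->
  forall tau : R, `|tau| <= M -> `|tau * N%:R `^ (a - 1)| < d.
Proof.
move=> a1 M0 d0.
have [N0 HN0] := @powN_small R (a - 1) (d / (M + 1)) ltac:(lra) ltac:(rewrite divr_gt0 //; lra).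
exists N0 => N N1 N2 tau htau.
have h := HN0 N N1 N2.
have p0 := powR_ge0 (N%:R : R) (a - 1).
rewrite normrM (ger0_norm p0).
have h2 : d / (M + 1) * (M + 1) = d by field; lra.
nra.
Qed.



Lemma case1 (R : realType) (q : R -> R) (v : R) : 0 <= v -> expand_hyp q v ->
  forall alpha : R, 0 <= alpha < 2^-1 ->
  unif_cvg_compacts setT (fun N tau => q (tau * N%:R `^ (alpha - 1)) ^+ N) (fun _ => 1).
Proof.
move=> hv hexp alpha /andP[a0 a1] K Kc _ e e0.
have [M [M0 HM]] := @cpt_bound R K Kc.
have [d d0 Hd] := hexp 1 ltr01.
pose C := M ^+ 2 * (v + 1).
have C0 : 0 <= C by rewrite mulr_ge0 ?sqr_ge0 //; lra.
pose eta := e / (8 * (e + 1)).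
have eta0 : 0 < eta by rewrite divr_gt0 //; lra.
have etaE : eta * (8 * (e + 1)) = e by rewrite /eta; field; lra.
have eta1 : eta <= 1 / 8 by nra.
have eta2 : eta <= e / 8 by nra.
have [N1 HN1] := @t_small R alpha M d ltac:(lra) M0 d0.
have [N2 HN2] := @powN_small R (2 * alpha - 1) (eta / (C + 1)) ltac:(lra) ltac:(rewrite divr_gt0 //; lra).
exists (maxn N1 N2) => N N0 hN tau Ktau.
have htau := HM tau Ktau.
have ht := HN1 N N0 (leq_trans (leq_maxl _ _) hN) tau htau.
set t := tau * N%:R `^ (alpha - 1) in ht *.
have hq := Hd t ht; rewrite mul1r in hq.
have hs := HN2 N N0 (leq_trans (leq_maxr _ _) hN).
set s := N%:R `^ (2 * alpha - 1) in hs.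
have s0 : 0 <= s := powR_ge0 _ _.
have hNt : N%:R * t ^+ 2 = tau ^+ 2 * s.
  by rewrite /t Nt2 // /s; congr (_ * _ `^ _); ring.
have N1r : (1 : R) <= N%:R by rewrite ler1n.
set x := q t - 1.
have t2 : 0 <= t ^+ 2 by rewrite sqr_ge0.
have hx : `|x| <= (v + 1) * t ^+ 2.
  have -> : x = (q t - (1 - v * t ^+ 2)) - v * t ^+ 2 by rewrite /x; ring.
  apply: (le_trans (ler_normB _ _)); rewrite normrM (ger0_norm hv) (ger0_norm t2).
  lra.
have tau2 : tau ^+ 2 <= M ^+ 2.
  by rewrite -real_normK ?num_real // lerXn2r ?nnegrE.
pose u := C * s.
have u0 : 0 <= u by rewrite mulr_ge0.
have u1 : u <= eta.
  have h1 : C * s <= C * (eta / (C + 1)) by rewrite ler_wpM2l // ltW.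
  have h2 : C * (eta / (C + 1)) <= eta.
    rewrite mulrA ler_pdivrMr; last lra.
    nra.
  rewrite /u; lra.
have hNx : `|N%:R * x| <= u.
  rewrite normrM (ger0_norm (ler0n _ _)).
  have := ler_wpM2l (ler0n R N) hx.
  rewrite mulrCA hNt => h.
  apply: (le_trans h); rewrite /u /C.
  have : tau ^+ 2 * s <= M ^+ 2 * s by rewrite ler_wpM2r.
  nra.
have hxN : `|x| <= `|N%:R * x|.
  rewrite normrM (ger0_norm (ler0n _ _)).
  have := normr_ge0 x; nra.
have hNx2 : N%:R * x ^+ 2 <= u ^+ 2.
  have h1 : N%:R * x ^+ 2 <= (N%:R * x) ^+ 2.
    rewrite exprMn; have := sqr_ge0 x; nra.
  apply: (le_trans h1).
  rewrite -real_normK ?num_real // lerXn2r ?nnegrE //.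
have hxh : `|x| <= 2^-1 by lra.
have hk : `|N%:R * x - 0| + 2 * N%:R * x ^+ 2 <= u + 2 * u ^+ 2 by rewrite subr0; lra.
have hk2 : u + 2 * u ^+ 2 <= 2^-1 by nra.
have H := @pow_exp R x 0 (u + 2 * u ^+ 2) N hxh hk hk2.
rewrite expR0 mulr1 in H.
have -> : q t = 1 + x by rewrite /x; ring.
apply: (le_lt_trans H); nra.
Qed.

Lemma case2 (R : realType) (q : R -> R) (v : R) : 0 <= v -> expand_hyp q v ->
  unif_cvg_compacts setT (fun N tau => q (tau * N%:R `^ (2^-1 - 1)) ^+ N)
     (fun tau => expR (- (tau ^+ 2 * v))).
Proof.
move=> hv hexp K Kc _ e e0.
have [M [M0 HM]] := @cpt_bound R K Kc.
pose B := M ^+ 2 * v.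
have M2 : 0 <= M ^+ 2 by rewrite sqr_ge0.
have B0 : 0 <= B by rewrite mulr_ge0.
pose eta := e / (8 * (e + 1)).
have eta0 : 0 < eta by rewrite divr_gt0 //; lra.
have etaE : eta * (8 * (e + 1)) = e by rewrite /eta; field; lra.
have eta1 : eta <= 1 / 8 by nra.
have eta2 : eta <= e / 8 by nra.
pose ee := eta / (M ^+ 2 + 1).
have ee0 : 0 < ee by rewrite divr_gt0 //; lra.
have eeM : ee * M ^+ 2 <= eta.
  rewrite /ee mulrAC ler_pdivrMr; last lra.
  nra.
have [d d0 Hd] := hexp ee ee0.
have [N1 HN1] := @t_small R (2^-1) M d ltac:(lra) M0 d0.
pose r := eta / (2 * (B + 1) ^+ 2 + 2).
have B1 : 1 <= (B + 1) ^+ 2 by nra.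
have r0 : 0 < r by rewrite divr_gt0 //; lra.
have rE : r * (2 * (B + 1) ^+ 2 + 2) = eta by rewrite /r; field; lra.
have [N2 HN2] := @powN_small R (-1) r ltac:(lra) r0.
exists (maxn N1 N2) => N N0 hN tau Ktau.
have htau := HM tau Ktau.
have ht := HN1 N N0 (leq_trans (leq_maxl _ _) hN) tau htau.
set t := tau * N%:R `^ (2^-1 - 1) in ht *.
have hq := Hd t ht.
have hw := HN2 N N0 (leq_trans (leq_maxr _ _) hN).
rewrite powR_inv1 ?ler0n // in hw.
have Np : (0 : R) < N%:R by rewrite ltr0n.
pose w := (N%:R : R)^-1.
have wN : w * N%:R = 1 by rewrite /w mulVf // gt_eqF.
have w0 : 0 < w by rewrite /w invr_gt0.
rewrite -/w in hw; clearbody w.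
have hNt : N%:R * t ^+ 2 = tau ^+ 2.
  rewrite /t Nt2 //.
  have -> : 2 * (2^-1 - 1) + 1 = 0 :> R by field.
  by rewrite powRr0 mulr1.
have t2 : 0 <= t ^+ 2 by rewrite sqr_ge0.
have tau2 : tau ^+ 2 <= M ^+ 2.
  by rewrite -real_normK ?num_real // lerXn2r ?nnegrE.
set x := q t - 1.
set y := - (tau ^+ 2 * v).
have y0 : y <= 0 by rewrite /y oppr_le0 mulr_ge0 // sqr_ge0.
have yB : `|y| <= B.
  rewrite /y normrN normrM (ger0_norm hv) ger0_norm ?sqr_ge0 //.
  by rewrite /B ler_wpM2r.
have hNxy : `|N%:R * x - y| <= eta.
  have -> : N%:R * x - y = N%:R * (q t - (1 - v * t ^+ 2)).
    rewrite /x /y -hNt; ring.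
  rewrite normrM (ger0_norm (ler0n _ _)).
  have := ler_wpM2l (ler0n R N) hq.
  rewrite [N%:R * (ee * _)]mulrCA hNt => h; apply: (le_trans h).
  have : ee * tau ^+ 2 <= ee * M ^+ 2 by rewrite ler_wpM2l // ltW.
  lra.
have hNx : `|N%:R * x| <= B + 1.
  have -> : N%:R * x = (N%:R * x - y) + y by ring.
  apply: (le_trans (ler_normD _ _)); lra.
have hNx0 := normr_ge0 (N%:R * x).
have hx : `|x| <= (B + 1) * w.
  have -> : x = w * (N%:R * x) by rewrite mulrA wN mul1r.
  rewrite normrM (ger0_norm (ltW w0)); nra.
have hNx2 : N%:R * x ^+ 2 <= (B + 1) ^+ 2 * w.
  have -> : N%:R * x ^+ 2 = (N%:R * x) ^+ 2 * w.
    have e1 : N%:R * x ^+ 2 = N%:R * x ^+ 2 * (w * N%:R) by rewrite wN mulr1.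
    by rewrite [LHS]e1; ring.
  rewrite ler_wpM2r ?(ltW w0) //.
  rewrite -real_normK ?num_real // lerXn2r ?nnegrE //; lra.
have hBw : (B + 1) ^+ 2 * w <= eta / 2.
  have : (B + 1) ^+ 2 * w <= (B + 1) ^+ 2 * r by rewrite ler_wpM2l ?sqr_ge0 // ltW.
  nra.
have hBw2 : (B + 1) * w <= (B + 1) ^+ 2 * w.
  rewrite ler_wpM2r ?(ltW w0) //; nra.
have hxh : `|x| <= 2^-1 by lra.
pose k := eta + 2 * ((B + 1) ^+ 2 * w).
have hk : `|N%:R * x - y| + 2 * N%:R * x ^+ 2 <= k by rewrite /k; lra.
have hk2 : k <= 2^-1 by rewrite /k; lra.
have H := @pow_exp R x y k N hxh hk hk2.
have -> : q t = 1 + x by rewrite /x; ring.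
apply: (le_lt_trans H).
have Ey : expR y <= 1 by rewrite -expR0 ler_expR.
have Ey0 := expR_gt0 y.
have k0 : 0 <= k by rewrite /k; have := ltW w0; nra.
have k2 : k <= 2 * eta by rewrite /k; lra.
have := ler_wpM2l k0 Ey; rewrite mulr1 => h.
lra.
Qed.

Lemma case3 (R : realType) (q : R -> R) (v : R) : 0 < v -> expand_hyp q v ->
  (forall t, 0 <= q t) ->
  forall alpha : R, 2^-1 < alpha < 1 ->
  unif_cvg_compacts (~` [set 0]) (fun N tau => q (tau * N%:R `^ (alpha - 1)) ^+ N)
     (fun _ => 0).
Proof.
move=> hv hexp hq0 alpha /andP[a1 a2] K Kc KS e e0.
have [M [M0 HM]] := @cpt_bound R K Kc.
have [del del0 Hdel] := @cpt_away R K Kc KS.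
have [d d0 Hd] := hexp (v / 2) ltac:(lra).
have [N1 HN1] := @t_small R alpha M d a2 M0 d0.
pose L := 2 / (v * del ^+ 2 * e).
have vde : 0 < v * del ^+ 2 * e by rewrite !mulr_gt0 // exprn_gt0.
have LE : L * (v * del ^+ 2 * e) = 2 by rewrite /L -mulrA mulVf ?gt_eqF // mulr1.
have [N2 HN2] := @powN_big R (2 * alpha - 1) L ltac:(lra).
exists (maxn N1 N2) => N N0 hN tau Ktau.
have htau := HM tau Ktau.
have hdt := Hdel tau Ktau.
have ht := HN1 N N0 (leq_trans (leq_maxl _ _) hN) tau htau.
set t := tau * N%:R `^ (alpha - 1) in ht *.
have hq := Hd t ht.
have hs := HN2 N N0 (leq_trans (leq_maxr _ _) hN).
set s := N%:R `^ (2 * alpha - 1) in hs.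
have hNt : N%:R * t ^+ 2 = tau ^+ 2 * s.
  by rewrite /t Nt2 // /s; congr (_ * _ `^ _); ring.
have del2 : del ^+ 2 <= tau ^+ 2.
  by rewrite -[tau ^+ 2]real_normK ?num_real // lerXn2r ?nnegrE // ltW.
have s0 : 0 <= s := powR_ge0 _ _.
have t2 : 0 <= t ^+ 2 by rewrite sqr_ge0.
have hq1 : q t - 1 <= - (v / 2 * t ^+ 2).
  have := ler_norm (q t - (1 - v * t ^+ 2)); lra.
pose X := v / 2 * (del ^+ 2 * s).
have hNq : N%:R * (q t - 1) <= - X.
  have := ler_wpM2l (ler0n R N) hq1.
  have -> : N%:R * - (v / 2 * t ^+ 2) = - (v / 2 * (N%:R * t ^+ 2)) by ring.
  rewrite hNt => h; apply: (le_trans h).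
  rewrite lerN2 /X ler_wpM2l //; first lra.
  by rewrite ler_wpM2r.
have hX : 1 < e * expR X.
  have h1 := expR_ge1Dx X.
  have h2 : 1 < e * X.
    have h3 : del ^+ 2 * L < del ^+ 2 * s by rewrite ltr_pM2l // exprn_gt0.
    have h4 : v / 2 * e * (del ^+ 2 * L) < v / 2 * e * (del ^+ 2 * s).
      by rewrite ltr_pM2l // mulr_gt0 // divr_gt0.
    have E1 : v / 2 * e * (del ^+ 2 * L) = L * (v * del ^+ 2 * e) / 2 by ring.
    rewrite E1 LE divff // in h4.
    by apply: (lt_le_trans h4); rewrite /X le_eqVlt; apply/orP; left; apply/eqP; ring.
  have := ler_wpM2l (ltW e0) h1; lra.
rewrite subr0 ger0_norm ?exprn_ge0 //.
apply: (le_lt_trans (y := expR (- X))).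
  apply: (le_trans (y := expR (q t - 1) ^+ N)).
    apply: lerXn2r; rewrite ?nnegrE ?expR_ge0 //.
    by have := expR_ge1Dx (q t - 1); rewrite addrC subrK.
  by rewrite -expRM_natl ler_expR.
rewrite expRN -div1r ltr_pdivrMr ?expR_gt0 //.
Qed.

Theorem theorem1 (R : realType) (V : lmodType R[i]) (ip : V -> V -> R[i])
    (D : set V) (H : V -> V) (hbar : R) (U : R -> V -> V) (psi : V) :
  separable_Hilbert ip ->
  self_adjoint ip D H ->
  0 < hbar ->
  generated_by ip hbar D H U ->
  D psi -> ip psi psi = 1 ->
  let p := fun t : R => sqmod (ip psi (U t psi)) in
  let pN := fun (alpha : R) (N : nat) (tau : R) =>
              p (tau * (N%:R `^ (alpha - 1))) ^+ N in
  let tauZinv2 := hbar ^-2 *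
      (complex.Re (ip (H psi) (H psi)) - complex.Re (ip psi (H psi)) ^+ 2) in
  [/\ (forall alpha : R, 0 <= alpha < 2^-1 ->
         unif_cvg_compacts setT (pN alpha) (fun _ => 1)),
      unif_cvg_compacts setT (pN (2^-1))
         (fun tau => expR (- (tau ^+ 2 * tauZinv2))) &
      (forall alpha : R, 2^-1 < alpha < 1 ->
         ~ (exists lambda : R[i], H psi = lambda *: psi) ->
         unif_cvg_compacts (~` [set 0]) (pN alpha) (fun _ => 0))].

Proof.
move=> hsep hsa hb hgen hD hpp p pN tauZinv2.
case: hsep => hip _ _.
case: hgen => [[hlin hU hU0 hUadd hcont] hdom hgenD].
set a := - ('i / hbar%:C) *: H psi.
have hd : diff_quot_to ip U psi a := hgenD psi hD.
have hexp := @expansion R V ip hip U psi a hU hU0 hd hpp.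
have [hv0 hveq] := @variance_pos R V ip hip psi (H psi) hpp.
have hb0 : hbar != 0 by rewrite gt_eqF.
have hconv : n2 ip a - complex.Im (ip psi a) ^+ 2 = tauZinv2.
  rewrite /a /tauZinv2 (@n2Z R V ip hip) (@ipZ2 R V ip hip).
  have hc : ('i / hbar%:C : R[i]) = 'i * (hbar^-1)%:C by rewrite fmorphV.
  rewrite hc /n2; case: (ip psi (H psi)) => zr zi /=.
  by field.
rewrite hconv in hexp.
have hp0 : forall t, 0 <= p t by move=> t; rewrite /p /sqmod addr_ge0 ?sqr_ge0.
have hh : 0 < hbar ^-2 by rewrite invr_gt0 exprn_gt0.
have hv : 0 <= tauZinv2 by rewrite /tauZinv2 mulr_ge0 // ltW.
split.
- move=> alpha ha; exact: (@case1 R p tauZinv2 hv hexp alpha ha).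
- exact: (@case2 R p tauZinv2 hv hexp).
- move=> alpha ha hne.
  have hvp : 0 < tauZinv2.
    rewrite lt_neqAle hv andbT; apply/eqP => h0.
    apply: hne; exists (ip psi (H psi)); apply: hveq.
    move: h0; rewrite /tauZinv2 => /esym /eqP; rewrite mulf_eq0 (gt_eqF hh) /=.
    by move/eqP.
  exact: (@case3 R p tauZinv2 hvp hexp hp0 alpha ha).
Qed.
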